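(* Fix $\mathbf{W}>0$ and $f>0$ and consider the tree–grass ODE system \[ \frac{dG}{dt}=g_G(\mathbf{W})G\Big(1-\frac{G}{K_G(\mathbf{W})}\Big)-\delta_G G-\eta_{TG}TG-\lambda_{fG}fG,\qquad \frac{dT}{dt}=g_T(\mathbf{W})T\Big(1-\frac{T}{K_T(\mathbf{W})}\Big)-\delta_T T-f\vartheta(T)\omega(G)T . \] Then: (1) The desert equilibrium $\mathbf{E}_0=(0,0)$ is locally asymptotically stable when $\mathcal{R}^1_{\mathbf{W}}<1$ and $\mathcal{R}^2_{\mathbf{W}}<1$. (2) The grassland equilibrium $\mathbf{E}_G=(G^*,0)$ (which exists when $\mathcal{R}^2_{\mathbf{W}}>1$) is locally asymptotically stable when $\mathcal{R}_G<1$. (3) The forest equilibrium $\mathbf{E}_F=(0,T^* )$ (which exists when $\mathcal{R}^1_{\mathbf{W}}>1$) is locally asymptotically stable when $\mathcal{R}_F<1$.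
   Context: All parameters $\gamma_G,\gamma_T,b_G,b_T,c_G,c_T,d_G,d_T,a_G,a_T,\delta_G,\delta_T,\eta_{TG},\lambda_{fG},\lambda_{fT}^{min},\lambda_{fT}^{max},p,\alpha$ are positive constants, $\lambda_{fT}^{min}<\lambda_{fT}^{max}$. $g_G(\mathbf{W})=\frac{\gamma_G\mathbf{W}}{b_G+\mathbf{W}}$, $g_T(\mathbf{W})=\frac{\gamma_T\mathbf{W}}{b_T+\mathbf{W}}$, $K_G(\mathbf{W})=\frac{c_G}{1+d_Ge^{-a_G\mathbf{W}}}$, $K_T(\mathbf{W})=\frac{c_T}{1+d_Te^{-a_T\mathbf{W}}}$, $\omega(G)=\frac{G^2}{G^2+\alpha^2}$, $\vartheta(T)=\lambda_{fT}^{min}+(\lambda_{fT}^{max}-\lambda_{fT}^{min})e^{-pT}$. Thresholds: $\mathcal{R}^1_{\mathbf{W}}=g_T(\mathbf{W})/\delta_T$, $\mathcal{R}^2_{\mathbf{W}}=g_G(\mathbf{W})/(\delta_G+\lambda_{fG}f)$, $T^*=K_T(\mathbf{W})(1-1/\mathcal{R}^1_{\mathbf{W}})$, $G^*=K_G(\mathbf{W})(1-1/\mathcal{R}^2_{\mathbf{W}})$, $\mathcal{R}_F=\frac{g_G(\mathbf{W})}{\eta_{TG}T^*+\delta_G+\lambda_{fG}f}$, $\mathcal{R}_G=\frac{g_T(\mathbf{W})}{\delta_T+\lambda_{fT}^{max}f\omega(G^* )}$. *)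

(* Defs.v *)
From Stdlib Require Import Reals.
Open Scope R_scope.

Record params := Params {
  gammaG : R; gammaT : R; bG : R; bT : R; cG : R; cT : R;
  dG : R; dT : R; aG : R; aT : R; deltaG : R; deltaT : R;
  etaTG : R; lamfG : R; lamfTmin : R; lamfTmax : R; pp : R; alpha : R }.

Definition params_pos (p : params) : Prop :=
  0 < gammaG p /\ 0 < gammaT p /\ 0 < bG p /\ 0 < bT p /\ 0 < cG p /\
  0 < cT p /\ 0 < dG p /\ 0 < dT p /\ 0 < aG p /\ 0 < aT p /\
  0 < deltaG p /\ 0 < deltaT p /\ 0 < etaTG p /\ 0 < lamfG p /\
  0 < lamfTmin p /\ 0 < lamfTmax p /\ 0 < pp p /\ 0 < alpha p /\
  lamfTmin p < lamfTmax p.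

Definition g_G (p : params) (W : R) : R := gammaG p * W / (bG p + W).
Definition g_T (p : params) (W : R) : R := gammaT p * W / (bT p + W).
Definition K_G (p : params) (W : R) : R := cG p / (1 + dG p * exp (- aG p * W)).
Definition K_T (p : params) (W : R) : R := cT p / (1 + dT p * exp (- aT p * W)).
Definition omega (p : params) (G : R) : R := G ^ 2 / (G ^ 2 + alpha p ^ 2).
Definition vartheta (p : params) (T : R) : R :=
  lamfTmin p + (lamfTmax p - lamfTmin p) * exp (- pp p * T).

Definition F_G (p : params) (W f G T : R) : R :=
  g_G p W * G * (1 - G / K_G p W) - deltaG p * G - etaTG p * T * G
  - lamfG p * f * G.
Definition F_T (p : params) (W f G T : R) : R :=
  g_T p W * T * (1 - T / K_T p W) - deltaT p * T
  - f * vartheta p T * omega p G * T.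

Definition R1W (p : params) (W : R) : R := g_T p W / deltaT p.
Definition R2W (p : params) (W f : R) : R := g_G p W / (deltaG p + lamfG p * f).
Definition Tstar (p : params) (W : R) : R := K_T p W * (1 - 1 / R1W p W).
Definition Gstar (p : params) (W f : R) : R := K_G p W * (1 - 1 / R2W p W f).
Definition R_F (p : params) (W f : R) : R :=
  g_G p W / (etaTG p * Tstar p W + deltaG p + lamfG p * f).
Definition R_G (p : params) (W f : R) : R :=
  g_T p W / (deltaT p + lamfTmax p * f * omega p (Gstar p W f)).

Definition is_solution (p : params) (W f : R) (G T : R -> R) : Prop :=
  (forall t, 0 < t ->
     derivable_pt_lim G t (F_G p W f (G t) (T t)) /\
     derivable_pt_lim T t (F_T p W f (G t) (T t))) /\
  (forall eps, 0 < eps -> exists d, 0 < d /\ forall s, 0 <= s < d ->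
     Rabs (G s - G 0) < eps /\ Rabs (T s - T 0) < eps).

Definition is_equilibrium (p : params) (W f Ge Te : R) : Prop :=
  F_G p W f Ge Te = 0 /\ F_T p W f Ge Te = 0.

(* Local asymptotic stability (Lyapunov stability + local attractivity),
   distances measured in the max-norm on R^2. *)
Definition loc_asym_stable (p : params) (W f Ge Te : R) : Prop :=
  (forall eps, 0 < eps -> exists d, 0 < d /\
     forall G T, is_solution p W f G T ->
       Rabs (G 0 - Ge) < d -> Rabs (T 0 - Te) < d ->
       forall t, 0 <= t -> Rabs (G t - Ge) < eps /\ Rabs (T t - Te) < eps) /\
  (exists d0, 0 < d0 /\
     forall G T, is_solution p W f G T ->
       Rabs (G 0 - Ge) < d0 -> Rabs (T 0 - Te) < d0 ->
       forall eps, 0 < eps -> exists t0, forall t, t0 <= t ->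
         Rabs (G t - Ge) < eps /\ Rabs (T t - Te) < eps).

(* Main.v *)
Require Import Defs.
From Stdlib Require Import Reals Lra Classical.
Open Scope R_scope.
From Stdlib Require Import Lra Classical.

Lemma cont_of_der (V : R -> R) x l : derivable_pt_lim V x l ->
  forall e, 0 < e -> exists d, 0 < d /\ forall u, Rabs (u - x) < d -> Rabs (V u - V x) < e.
Proof.
  intros H e He.
  pose proof (derivable_continuous_pt V x (exist _ l H)) as C.
  destruct (C e He) as [a [Ha Hb]].
  exists a; split; [lra|]. intros u Hu.
  destruct (Req_dec u x) as [->|Hne].
  - rewrite Rminus_diag, Rabs_R0; lra.
  - apply (Hb u). split; [split; [exact I| congruence] | exact Hu].
Qed.

Lemma key (V V' : R -> R) s k c : 0 < k ->
  (forall t, s <= t -> derivable_pt_lim V t (V' t)) ->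
  (forall t, s <= t -> 0 <= V t) ->
  (forall t, s <= t -> V t < c -> V' t <= - k * V t) ->
  V s < c -> forall t, s <= t -> V t <= V s * exp (- k * (t - s)).
Proof.
  intros Hk HD Hpos HV Hs.
  set (W := fun u => V u * exp (k * (u - s))).
  set (W' := fun u => V' u * exp (k * (u - s)) + V u * (k * exp (k * (u - s)))).
  assert (HW : forall u, s <= u -> derivable_pt_lim W u (W' u)).
  { intros u Hu. unfold W, W'.
    assert (He : derivable_pt_lim (fun u => exp (k * (u - s))) u (k * exp (k * (u - s)))).
    { assert (H1 : derivable_pt_lim (fun u => k * (u - s)) u k).
      { pose proof (derivable_pt_lim_scal (fun u => u - s) k u 1) as H.
        rewrite Rmult_1_r in H. apply H.
        pose proof (derivable_pt_lim_minus id (fct_cte s) u 1 0 (derivable_pt_lim_id u) (derivable_pt_lim_const s u)) as H2.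
        replace 1 with (1 - 0) by ring. exact H2. }
      pose proof (derivable_pt_lim_comp _ exp u k _ H1 (derivable_pt_lim_exp (k * (u - s)))) as H2.
      rewrite Rmult_comm. exact H2. }
    exact (derivable_pt_lim_mult V _ u _ _ (HD u Hu) He). }
  assert (Hmono : forall a b, s <= a <= b -> (forall u, a < u < b -> V u < c) -> W b <= W a).
  { intros a b [Ha Hab] Hin.
    destruct (Req_dec a b) as [->|Hne]; [lra|].
    destruct (MVT_cor2 W W' a b) as [c0 [Heq Hc0]]; [lra| intros; apply HW; lra |].
    assert (W' c0 <= 0).
    { unfold W'. pose proof (HV c0 ltac:(lra) (Hin c0 Hc0)).
      pose proof (exp_pos (k * (c0 - s))). nra. }
    nra. }
  assert (Hall : forall t, s <= t -> V t < c).
  { intros t1 Ht1. apply Rnot_le_lt. intro Hbad.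
    set (E := fun t => s <= t /\ forall u, s <= u <= t -> V u < c).
    assert (Hb : bound E).
    { exists t1. intros t [Ht Hu]. destruct (Rle_dec t t1); [lra|].
      specialize (Hu t1 ltac:(lra)). lra. }
    assert (He : exists x, E x).
    { exists s. split; [lra|]. intros u Hu. replace u with s by lra. exact Hs. }
    destruct (completeness E Hb He) as [tau [Hub Hlub]].
    assert (Hstau : s <= tau) by (apply Hub; destruct He; unfold E; split; [lra| intros u Hu; replace u with s by lra; exact Hs]).
    assert (HA : forall u, s <= u < tau -> V u < c).
    { intros u Hu. destruct (classic (exists t, E t /\ u < t)) as [[t [[_ Ht] Hut]]|Hn].
      - apply Ht; lra.
      - exfalso. assert (tau <= u); [|lra]. apply Hlub. intros t Et.
        destruct (Rle_dec t u); [lra|]. exfalso; apply Hn; exists t; split; [exact Et|lra]. }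
    assert (HB : V tau < c).
    { pose proof (Hmono s tau ltac:(lra) ltac:(intros; apply HA; lra)) as Hm.
      unfold W in Hm. replace (s - s) with 0 in Hm by ring. rewrite Rmult_0_r, exp_0 in Hm.
      pose proof (exp_ineq1_le (k * (tau - s))). pose proof (Hpos tau Hstau).
      assert (0 <= k * (tau - s)) by nra. nra. }
    destruct (cont_of_der V tau (V' tau) (HD tau Hstau) (c - V tau) ltac:(lra)) as [d [Hd Hc]].
    assert (E (tau + d / 2)).
    { split; [lra|]. intros u Hu. destruct (Rlt_dec u tau).
      - apply HA; lra.
      - specialize (Hc u ltac:(apply Rabs_def1; lra)). apply Rabs_def2 in Hc. lra. }
    specialize (Hub _ H). lra. }
  intros t Ht.
  pose proof (Hmono s t ltac:(lra) ltac:(intros; apply Hall; lra)) as Hm.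
  unfold W in Hm. replace (s - s) with 0 in Hm by ring. rewrite Rmult_0_r, exp_0, Rmult_1_r in Hm.
  replace (- k * (t - s)) with (- (k * (t - s))) by ring. rewrite exp_Ropp.
  pose proof (exp_pos (k * (t - s))).
  apply (Rmult_le_reg_r (exp (k * (t - s)))); [lra|].
  rewrite Rmult_assoc, Rinv_l by lra. lra.
Qed.

Lemma sq_lt_abs x r : 0 < r -> x * x < r * r -> Rabs x < r.
Proof. intros Hr H. unfold Rabs; destruct (Rcase_abs x); nra. Qed.

Lemma abs_sq x y : Rabs x < y -> x * x <= y * y.
Proof. unfold Rabs; destruct (Rcase_abs x); intros; nra. Qed.

Lemma Vnn a b x y : 0 < a -> 0 < b -> 0 <= a * (x * x) + b * (y * y).
Proof. intros. pose proof (Rle_0_sqr x). pose proof (Rle_0_sqr y). unfold Rsqr in *.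
  apply Rplus_le_le_0_compat; apply Rmult_le_pos; lra. Qed.

Lemma regm m a b X Y Rr : 0 < m -> m <= a -> 0 <= b -> 0 <= X -> 0 <= Y ->
  a * X + b * Y < m * Rr -> X < Rr.
Proof. intros. apply (Rmult_lt_reg_l m); [lra|]. nra. Qed.

Lemma der_sq (G : R -> R) t g a c : derivable_pt_lim G t g ->
  derivable_pt_lim (fun t => a * ((G t - c) * (G t - c))) t (2 * a * (G t - c) * g).
Proof.
  intros H.
  pose proof (derivable_pt_lim_minus G (fct_cte c) t g 0 H (derivable_pt_lim_const c t)) as H1.
  pose proof (derivable_pt_lim_mult _ _ t _ _ H1 H1) as H2.
  pose proof (derivable_pt_lim_scal _ a t _ H2) as H3.
  unfold mult_real_fct, mult_fct, minus_fct, fct_cte in H3.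
  replace (2 * a * (G t - c) * g) with (a * ((g - 0) * (G t - c) + (G t - c) * (g - 0))) by ring.
  exact H3.
Qed.

Section LAS.
Variables (p : params) (W f Ge Te A B r k : R).
Hypotheses (HA : 0 < A) (HB : 0 < B) (Hr : 0 < r) (Hk : 0 < k).
Hypothesis Hly : forall G T, Rabs (G - Ge) < r -> Rabs (T - Te) < r ->
  2 * A * (G - Ge) * F_G p W f G T + 2 * B * (T - Te) * F_T p W f G T
  <= - k * (A * ((G - Ge) * (G - Ge)) + B * ((T - Te) * (T - Te))).

Let m := Rmin A B.
Let M := Rmax A B.

Lemma core G T e : is_solution p W f G T -> 0 < e -> e <= r ->
  Rabs (G 0 - Ge) < m * e / (8 * M) -> Rabs (T 0 - Te) < m * e / (8 * M) ->
  exists s, 0 < s /\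
   (forall t, 0 <= t <= s -> Rabs (G t - Ge) < e /\ Rabs (T t - Te) < e) /\
   0 <= A * ((G s - Ge) * (G s - Ge)) + B * ((T s - Te) * (T s - Te)) < m * (e * e) /\
   (forall t, s <= t -> A * ((G t - Ge) * (G t - Ge)) + B * ((T t - Te) * (T t - Te)) <=
       (A * ((G s - Ge) * (G s - Ge)) + B * ((T s - Te) * (T s - Te))) * exp (- k * (t - s))).
Proof.
  intros [Hder Hcont] He Her HG0 HT0.
  assert (Hm : 0 < m) by (unfold m; apply Rmin_glb_lt; lra).
  assert (HmA : m <= A) by apply Rmin_l. assert (HmB : m <= B) by apply Rmin_r.
  assert (HAM : A <= M) by apply Rmax_l. assert (HBM : B <= M) by apply Rmax_r.
  set (d := m * e / (8 * M)) in *.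
  assert (Hd8 : d * (8 * M) = m * e) by (unfold d; field; lra).
  assert (Hd : 0 < d) by (unfold d; apply Rdiv_lt_0_compat; nra).
  destruct (Hcont d Hd) as [del [Hdel Hc]].
  set (s := del / 2).
  exists s. split; [unfold s; lra|].
  assert (Hde : d <= e / 8) by nra.
  assert (Hsm : forall t, 0 <= t <= s -> Rabs (G t - Ge) < 2 * d /\ Rabs (T t - Te) < 2 * d).
  { intros t Ht. destruct (Hc t ltac:(unfold s in *; lra)) as [H1 H2].
    split.
    - replace (G t - Ge) with ((G t - G 0) + (G 0 - Ge)) by ring.
      eapply Rle_lt_trans; [apply Rabs_triang|]. lra.
    - replace (T t - Te) with ((T t - T 0) + (T 0 - Te)) by ring.
      eapply Rle_lt_trans; [apply Rabs_triang|]. lra. }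
  split; [intros t Ht; destruct (Hsm t Ht); split; lra|].
  set (V := fun t => A * ((G t - Ge) * (G t - Ge)) + B * ((T t - Te) * (T t - Te))).
  assert (HVs : 0 <= V s < m * (e * e)).
  { destruct (Hsm s ltac:(unfold s; lra)) as [H1 H2].
    pose proof (abs_sq _ _ H1) as Hx. pose proof (abs_sq _ _ H2) as Hy.
    unfold V. split; [apply Vnn; lra|].
    assert (A * ((G s - Ge) * (G s - Ge)) <= M * (4 * (d * d))).
    { apply Rle_trans with (A * (4 * (d * d))). apply Rmult_le_compat_l; lra.
      apply Rmult_le_compat_r; nra. }
    assert (B * ((T s - Te) * (T s - Te)) <= M * (4 * (d * d))).
    { apply Rle_trans with (B * (4 * (d * d))). apply Rmult_le_compat_l; lra.
      apply Rmult_le_compat_r; nra. }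
    assert (8 * M * (d * d) = m * e * d) by (rewrite <- Hd8; ring).
    assert (m * e * d < m * (e * e)). { rewrite Rmult_assoc. apply Rmult_lt_compat_l; nra. }
    lra. }
  split; [exact HVs|].
  intros t Ht.
  apply (key V (fun t => 2 * A * (G t - Ge) * F_G p W f (G t) (T t) + 2 * B * (T t - Te) * F_T p W f (G t) (T t)) s k (m * (r * r)) Hk).
  - intros u Hu. destruct (Hder u ltac:(unfold s in *; lra)) as [D1 D2].
    pose proof (derivable_pt_lim_plus _ _ u _ _ (der_sq G u _ A Ge D1) (der_sq T u _ B Te D2)) as H.
    exact H.
  - intros u _. unfold V. apply Vnn; lra.
  - intros u _ Hu. unfold V in Hu.
    pose proof (Rle_0_sqr (G u - Ge)). pose proof (Rle_0_sqr (T u - Te)). unfold Rsqr in *.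
    assert (Hx : Rabs (G u - Ge) < r) by (apply sq_lt_abs; [lra| apply (regm m A B _ _ _ Hm HmA ltac:(lra) H H0 Hu)]).
    assert (Hy : Rabs (T u - Te) < r) by (apply sq_lt_abs; [lra| apply (regm m B A _ ((G u - Ge) * (G u - Ge)) _ Hm HmB ltac:(lra) H0 H); lra]).
    exact (Hly _ _ Hx Hy).
  - assert (m * (e * e) <= m * (r * r)) by (apply Rmult_le_compat_l; nra). lra.
  - exact Ht.
Qed.

Lemma las : loc_asym_stable p W f Ge Te.
Proof.
  assert (Hm : 0 < m) by (unfold m; apply Rmin_glb_lt; lra).
  assert (HmA : m <= A) by apply Rmin_l. assert (HmB : m <= B) by apply Rmin_r.
  assert (HAM : A <= M) by apply Rmax_l. assert (HBM : B <= M) by apply Rmax_r.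
  assert (after : forall G T e s, 0 < e -> 0 <= A * ((G s - Ge) * (G s - Ge)) + B * ((T s - Te) * (T s - Te)) < m * (e * e) ->
     (forall t, s <= t -> A * ((G t - Ge) * (G t - Ge)) + B * ((T t - Te) * (T t - Te)) <=
       (A * ((G s - Ge) * (G s - Ge)) + B * ((T s - Te) * (T s - Te))) * exp (- k * (t - s))) ->
     forall t, s <= t -> Rabs (G t - Ge) < e /\ Rabs (T t - Te) < e).
  { intros G T e s He [H0 H1] H t Ht. specialize (H t Ht).
    assert (exp (- k * (t - s)) <= 1).
    { rewrite <- exp_0. destruct (Req_dec t s) as [->|]. 
      - replace (- k * (s - s)) with 0 by ring; lra.
      - left. apply exp_increasing. nra. }
    pose proof (exp_pos (- k * (t - s))).
    assert (Hv : A * ((G t - Ge) * (G t - Ge)) + B * ((T t - Te) * (T t - Te)) < m * (e * e)).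
    { eapply Rle_lt_trans; [exact H|]. eapply Rle_lt_trans; [|exact H1].
      rewrite <- (Rmult_1_r (_ + _)) at 2. apply Rmult_le_compat_l; lra. }
    pose proof (Rle_0_sqr (G t - Ge)). pose proof (Rle_0_sqr (T t - Te)). unfold Rsqr in *.
    split; apply sq_lt_abs; try lra.
    - apply (regm m A B _ _ _ Hm HmA ltac:(lra) H4 H5 Hv).
    - apply (regm m B A _ ((G t - Ge) * (G t - Ge)) _ Hm HmB ltac:(lra) H5 H4); lra. }
  split.
  - intros eps Heps. set (e := Rmin eps r).
    assert (He : 0 < e) by (unfold e; apply Rmin_glb_lt; lra).
    assert (Her : e <= r) by apply Rmin_r. assert (Hee : e <= eps) by apply Rmin_l.
    exists (m * e / (8 * M)). split; [apply Rdiv_lt_0_compat; nra|].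
    intros G T Hsol HG HT t Ht.
    destruct (core G T e Hsol He Her HG HT) as [s [Hs [H1 [H2 H3]]]].
    destruct (Rle_dec t s).
    + destruct (H1 t ltac:(lra)); split; lra.
    + destruct (after G T e s He H2 H3 t ltac:(lra)); split; lra.
  - exists (m * r / (8 * M)). split; [apply Rdiv_lt_0_compat; nra|].
    intros G T Hsol HG HT eps Heps.
    destruct (core G T r Hsol Hr (Rle_refl r) HG HT) as [s [Hs [H1 [H2 H3]]]].
    set (Vs := A * ((G s - Ge) * (G s - Ge)) + B * ((T s - Te) * (T s - Te))) in *.
    exists (s + Vs / (k * (m * (eps * eps)))).
    intros t Ht.
    assert (Hq : 0 <= Vs / (k * (m * (eps * eps)))).
    { assert (0 < eps * eps) by nra. unfold Rdiv; apply Rmult_le_pos; [lra| left; apply Rinv_0_lt_compat; repeat apply Rmult_lt_0_compat; lra]. }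
    assert (Hq2 : Vs / (k * (m * (eps * eps))) * (k * (m * (eps * eps))) = Vs).
    { field. split; [lra| split; lra]. }
    assert (Hx : Vs * exp (- k * (t - s)) < m * (eps * eps)).
    { replace (- k * (t - s)) with (- (k * (t - s))) by ring. rewrite exp_Ropp.
      pose proof (exp_ineq1_le (k * (t - s))). pose proof (exp_pos (k * (t - s))).
      apply (Rmult_lt_reg_r (exp (k * (t - s)))); [lra|].
      rewrite Rmult_assoc, Rinv_l by lra. rewrite Rmult_1_r.
      assert (k * (t - s) * (m * (eps * eps)) >= Vs).
      { assert (t - s >= Vs / (k * (m * (eps * eps)))) by lra.
        assert (0 < k * (m * (eps * eps))) by (repeat apply Rmult_lt_0_compat; lra).
        replace (k * (t - s) * (m * (eps * eps))) with ((t - s) * (k * (m * (eps * eps)))) by ring.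
        rewrite <- Hq2. apply Rle_ge, Rmult_le_compat_r; lra. }
      assert (0 < m * (eps * eps)) by (repeat apply Rmult_lt_0_compat; lra).
      assert (m * (eps * eps) * exp (k * (t - s)) >= m * (eps * eps) * (1 + k * (t - s))).
      { apply Rle_ge, Rmult_le_compat_l; lra. }
      nra. }
    specialize (H3 t ltac:(lra)). fold Vs in H3.
    assert (Hv : A * ((G t - Ge) * (G t - Ge)) + B * ((T t - Te) * (T t - Te)) < m * (eps * eps)) by lra.
    pose proof (Rle_0_sqr (G t - Ge)). pose proof (Rle_0_sqr (T t - Te)). unfold Rsqr in *.
    split; apply sq_lt_abs; try lra.
    + apply (regm m A B _ _ _ Hm HmA ltac:(lra) H H0 Hv).
    + apply (regm m B A _ ((G t - Ge) * (G t - Ge)) _ Hm HmB ltac:(lra) H0 H); lra.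
Qed.
End LAS.

Lemma div_lt1 a b : 0 < b -> a / b < 1 -> a < b.
Proof. intros Hb H. apply (Rmult_lt_compat_r b) in H; [|lra].
  unfold Rdiv in H. rewrite Rmult_assoc, Rinv_l in H by lra. lra. Qed.
Lemma div_gt1 a b : 0 < b -> 1 < a / b -> b < a.
Proof. intros Hb H. apply (Rmult_lt_compat_r b) in H; [|lra].
  unfold Rdiv in H. rewrite Rmult_assoc, Rinv_l in H by lra. lra. Qed.

Section P.
Variables (p : params) (W f : R).
Hypotheses (Hp : params_pos p) (HW : 0 < W) (Hf : 0 < f).

Lemma gG_pos : 0 < g_G p W.
Proof. unfold params_pos in Hp; unfold g_G. apply Rdiv_lt_0_compat; [apply Rmult_lt_0_compat|]; lra. Qed.
Lemma gT_pos : 0 < g_T p W.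
Proof. unfold params_pos in Hp; unfold g_T. apply Rdiv_lt_0_compat; [apply Rmult_lt_0_compat|]; lra. Qed.
Lemma KG_pos : 0 < K_G p W.
Proof. unfold params_pos in Hp; unfold K_G. apply Rdiv_lt_0_compat; [lra|].
  pose proof (exp_pos (- aG p * W)). assert (0 < dG p * exp (- aG p * W)) by (apply Rmult_lt_0_compat; lra). lra. Qed.
Lemma KT_pos : 0 < K_T p W.
Proof. unfold params_pos in Hp; unfold K_T. apply Rdiv_lt_0_compat; [lra|].
  pose proof (exp_pos (- aT p * W)). assert (0 < dT p * exp (- aT p * W)) by (apply Rmult_lt_0_compat; lra). lra. Qed.

Lemma om_nn G : 0 <= omega p G.
Proof. unfold omega. simpl. pose proof (Rle_0_sqr G). pose proof (Rle_0_sqr (alpha p)). unfold Rsqr in *.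
  unfold params_pos in Hp. assert (0 < alpha p * alpha p) by nra.
  apply Rmult_le_pos; [nra|]. left; apply Rinv_0_lt_compat; nra. Qed.
Lemma om_le1 G : omega p G <= 1.
Proof. unfold omega. simpl. pose proof (Rle_0_sqr G). unfold Rsqr in *.
  unfold params_pos in Hp. assert (0 < alpha p * alpha p) by nra.
  rewrite !Rmult_1_r. apply (Rmult_le_reg_r (G * G + alpha p * alpha p)); [nra|].
  unfold Rdiv. rewrite Rmult_assoc, Rinv_l by nra. lra. Qed.
Lemma om_le G : omega p G <= G * G / (alpha p * alpha p).
Proof. unfold omega. simpl. pose proof (Rle_0_sqr G). unfold Rsqr in *.
  unfold params_pos in Hp. assert (0 < alpha p * alpha p) by nra.
  rewrite !Rmult_1_r. unfold Rdiv. apply Rmult_le_compat_l; [lra|].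
  apply Rinv_le_contravar; lra. Qed.
Lemma om_diff a b : omega p a - omega p b <= Rabs (a * a - b * b) / (alpha p * alpha p).
Proof. unfold omega. simpl. rewrite !Rmult_1_r.
  pose proof (Rle_0_sqr a). pose proof (Rle_0_sqr b). unfold Rsqr in *.
  unfold params_pos in Hp. set (q := alpha p * alpha p). assert (0 < q) by (unfold q; nra).
  replace (a * a / (a * a + q) - b * b / (b * b + q)) with
     ((a * a - b * b) * q / ((a * a + q) * (b * b + q))) by (field; lra).
  pose proof (Rle_abs (a * a - b * b)). pose proof (Rabs_pos (a * a - b * b)).
  set (z := a * a - b * b) in *. set (u := Rabs z) in *.
  assert (q * q <= (a * a + q) * (b * b + q)) by nra.
  apply Rle_trans with (u * q / ((a * a + q) * (b * b + q))).
  { unfold Rdiv. apply Rmult_le_compat_r; [left; apply Rinv_0_lt_compat; nra| nra]. }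
  unfold Rdiv. rewrite Rmult_assoc. apply Rmult_le_compat_l; [lra|].
  apply Rle_trans with (q * / (q * q)).
  - apply Rmult_le_compat_l; [lra|]. apply Rinv_le_contravar; nra.
  - right. field. lra. Qed.

Lemma th_pos T : 0 < vartheta p T.
Proof. unfold vartheta; unfold params_pos in Hp. pose proof (exp_pos (- pp p * T)).
  assert (0 < (lamfTmax p - lamfTmin p) * exp (- pp p * T)) by (apply Rmult_lt_0_compat; lra). lra. Qed.
Lemma th_le T : 0 <= T -> vartheta p T <= lamfTmax p.
Proof. intros HT. unfold vartheta; unfold params_pos in Hp.
  assert (exp (- pp p * T) <= 1). { rewrite <- exp_0. destruct (Req_dec T 0) as [->|].
    - replace (- pp p * 0) with 0 by ring; lra.
    - left; apply exp_increasing; nra. }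
  assert ((lamfTmax p - lamfTmin p) * exp (- pp p * T) <= (lamfTmax p - lamfTmin p)) by
    (rewrite <- (Rmult_1_r (lamfTmax p - lamfTmin p)) at 2; apply Rmult_le_compat_l; lra). lra. Qed.
Lemma th_ge T : lamfTmax p - (lamfTmax p - lamfTmin p) * pp p * Rabs T <= vartheta p T.
Proof. unfold vartheta; unfold params_pos in Hp.
  pose proof (exp_ineq1_le (- pp p * T)). pose proof (Rle_abs T). pose proof (Rle_abs (-T)). rewrite Rabs_Ropp in *.
  assert (1 - pp p * Rabs T <= exp (- pp p * T)) by nra.
  assert ((lamfTmax p - lamfTmin p) * (1 - pp p * Rabs T) <= (lamfTmax p - lamfTmin p) * exp (- pp p * T)) by (apply Rmult_le_compat_l; lra).
  nra. Qed.
Lemma th0 : vartheta p 0 = lamfTmax p.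
Proof. unfold vartheta. replace (- pp p * 0) with 0 by ring. rewrite exp_0. ring. Qed.
End P.

Lemma abs_bnd x r : Rabs x < r -> -r < x < r.
Proof. intros H. apply Rabs_def2 in H. lra. Qed.

Lemma case1 p W f : params_pos p -> 0 < W -> 0 < f -> R1W p W < 1 -> R2W p W f < 1 ->
  is_equilibrium p W f 0 0 /\ loc_asym_stable p W f 0 0.
Proof.
  intros Hp HW Hf H1 H2.
  split. { split; unfold F_G, F_T; ring. }
  pose proof (gG_pos p W Hp HW) as HgG. pose proof (gT_pos p W Hp HW) as HgT.
  pose proof (KG_pos p W Hp) as HKG. pose proof (KT_pos p W Hp) as HKT.
  pose proof Hp as Hp'. unfold params_pos in Hp'.
  unfold R1W in H1. apply div_lt1 in H1; [|lra].
  unfold R2W in H2. apply div_lt1 in H2; [|nra].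
  set (a0 := g_G p W - deltaG p - lamfG p * f).
  set (b0 := g_T p W - deltaT p).
  set (c1 := g_G p W / K_G p W). set (c2 := g_T p W / K_T p W).
  assert (Hc1 : 0 < c1) by (apply Rdiv_lt_0_compat; lra).
  assert (Hc2 : 0 < c2) by (apply Rdiv_lt_0_compat; lra).
  set (r1 := - a0 / (2 * (c1 + etaTG p))). set (r2 := - b0 / (2 * c2)).
  assert (Hr1 : r1 * (2 * (c1 + etaTG p)) = - a0) by (unfold r1; field; lra).
  assert (Hr2 : r2 * (2 * c2) = - b0) by (unfold r2; field; lra).
  assert (0 < r1) by (unfold r1; apply Rdiv_lt_0_compat; unfold a0; lra).
  assert (0 < r2) by (unfold r2; apply Rdiv_lt_0_compat; unfold b0; lra).
  set (r := Rmin r1 r2).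
  assert (r <= r1) by apply Rmin_l. assert (r <= r2) by apply Rmin_r.
  assert (0 < r) by (apply Rmin_glb_lt; lra).
  set (k := Rmin (- a0) (- b0)).
  assert (k <= - a0) by apply Rmin_l. assert (k <= - b0) by apply Rmin_r.
  assert (0 < k) by (apply Rmin_glb_lt; unfold a0, b0; lra).
  apply (las p W f 0 0 1 1 r k); try lra.
  intros G T HG HT. rewrite !Rminus_0_r in *.
  apply abs_bnd in HG. apply abs_bnd in HT.
  assert (EG : F_G p W f G T = G * (a0 - c1 * G - etaTG p * T)) by (unfold F_G, a0, c1; field; lra).
  assert (ET : F_T p W f G T = T * (b0 - c2 * T - f * vartheta p T * omega p G))
    by (unfold F_T, b0, c2; field; lra).
  rewrite EG, ET.
  assert (Ha : a0 - c1 * G - etaTG p * T <= a0 / 2).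
  { assert (- c1 * G <= c1 * r) by nra. assert (- etaTG p * T <= etaTG p * r) by nra.
    assert (r * (c1 + etaTG p) <= r1 * (c1 + etaTG p)) by (apply Rmult_le_compat_r; lra). lra. }
  assert (Hb : b0 - c2 * T - f * vartheta p T * omega p G <= b0 / 2).
  { pose proof (th_pos p Hp T). pose proof (om_nn p Hp G).
    assert (0 <= f * vartheta p T * omega p G) by (apply Rmult_le_pos; [apply Rmult_le_pos|]; lra).
    assert (- c2 * T <= c2 * r) by nra.
    assert (r * c2 <= r2 * c2) by (apply Rmult_le_compat_r; lra). lra. }
  pose proof (Rle_0_sqr G). pose proof (Rle_0_sqr T). unfold Rsqr in *.
  assert (G * G * (a0 - c1 * G - etaTG p * T) <= G * G * (a0 / 2)) by (apply Rmult_le_compat_l; lra).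
  assert (T * T * (b0 - c2 * T - f * vartheta p T * omega p G) <= T * T * (b0 / 2)) by (apply Rmult_le_compat_l; lra).
  assert (G * G * k <= G * G * (- a0)) by (apply Rmult_le_compat_l; lra).
  assert (T * T * k <= T * T * (- b0)) by (apply Rmult_le_compat_l; lra).
  nra.
Qed.

Lemma case2 p W f : params_pos p -> 0 < W -> 0 < f -> 1 < R2W p W f -> R_G p W f < 1 ->
  is_equilibrium p W f (Gstar p W f) 0 /\ loc_asym_stable p W f (Gstar p W f) 0.
Proof.
  intros Hp HW Hf H2 HRG.
  pose proof (gG_pos p W Hp HW) as HgG. pose proof (gT_pos p W Hp HW) as HgT.
  pose proof (KG_pos p W Hp) as HKG. pose proof (KT_pos p W Hp) as HKT.
  pose proof Hp as Hp'. unfold params_pos in Hp'. decompose [and] Hp'.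
  set (D := deltaG p + lamfG p * f).
  assert (HD : 0 < D) by (unfold D; nra).
  pose proof H2 as H2'. unfold R2W in H2'. fold D in H2'. apply div_gt1 in H2'; [|lra].
  set (Gs := Gstar p W f).
  assert (EqG : g_G p W * (1 - Gs / K_G p W) = D).
  { unfold Gs, Gstar, R2W. fold D. field. repeat split; lra. }
  assert (HGs : 0 < Gs).
  { unfold Gs, Gstar, R2W. fold D. apply Rmult_lt_0_compat; [lra|].
    replace (1 / (g_G p W / D)) with (D / g_G p W) by (field; lra).
    assert (D / g_G p W < 1). { apply (Rmult_lt_reg_r (g_G p W)); [lra|]. unfold Rdiv. rewrite Rmult_assoc, Rinv_l by lra. lra. }
    lra. }
  assert (EG : forall G T, F_G p W f G T = G * (- (g_G p W / K_G p W) * (G - Gs) - etaTG p * T)).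
  { intros G T. assert (Hx : F_G p W f G T = G * (- (g_G p W / K_G p W) * (G - Gs) - etaTG p * T) + G * (g_G p W * (1 - Gs / K_G p W) - D)).
    { unfold F_G, D. field. lra. }
    rewrite Hx, EqG. ring. }
  split. { split. rewrite EG. ring. unfold F_T. ring. }
  pose proof (om_nn p Hp Gs) as Hom.
  unfold R_G in HRG. fold Gs in HRG. apply div_lt1 in HRG; [|assert (0 <= lamfTmax p * f * omega p Gs) by (apply Rmult_le_pos; [apply Rmult_le_pos|]; lra); lra].
  set (b0 := g_T p W - deltaT p - lamfTmax p * f * omega p Gs).
  assert (Hb0 : b0 < 0) by (unfold b0; lra).
  set (c1 := g_G p W / K_G p W). set (c2 := g_T p W / K_T p W).
  assert (Hc1 : 0 < c1) by (apply Rdiv_lt_0_compat; lra).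
  assert (Hc2 : 0 < c2) by (apply Rdiv_lt_0_compat; lra).
  set (Cp := (lamfTmax p - lamfTmin p) * pp p).
  assert (HCp : 0 < Cp) by (unfold Cp; apply Rmult_lt_0_compat; lra).
  set (ia := / (alpha p * alpha p)).
  assert (Hia : 0 < ia) by (unfold ia; apply Rinv_0_lt_compat; nra).
  set (L := c2 + f * Cp + f * lamfTmax p * (3 * Gs) * ia).
  assert (HL : 0 < L).
  { unfold L. assert (0 < f * lamfTmax p * (3 * Gs) * ia) by (apply Rmult_lt_0_compat; [apply Rmult_lt_0_compat; [apply Rmult_lt_0_compat|]|]; lra). assert (0 < f * Cp) by (apply Rmult_lt_0_compat; lra). lra. }
  set (r2 := - b0 / (2 * L)).
  assert (Hr2 : r2 * (2 * L) = - b0) by (unfold r2; field; lra).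
  assert (0 < r2) by (unfold r2; apply Rdiv_lt_0_compat; lra).
  set (r := Rmin (Gs / 2) r2).
  assert (r <= Gs / 2) by apply Rmin_l. assert (r <= r2) by apply Rmin_r.
  assert (0 < r) by (apply Rmin_glb_lt; lra).
  set (P := 3 * Gs * (etaTG p * etaTG p) / c1).
  assert (HP : 0 < P) by (unfold P; apply Rdiv_lt_0_compat; [apply Rmult_lt_0_compat; nra| lra]).
  set (B := 2 * P / (- b0)).
  assert (HB : B * (- b0) = 2 * P) by (unfold B; field; lra).
  assert (HBp : 0 < B) by (unfold B; apply Rdiv_lt_0_compat; lra).
  set (k := Rmin (3 / 4 * c1 * Gs) (- b0 / 2)).
  assert (k <= 3 / 4 * c1 * Gs) by apply Rmin_l. assert (k <= - b0 / 2) by apply Rmin_r.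
  assert (0 < k) by (apply Rmin_glb_lt; nra).
  apply (las p W f Gs 0 1 B r k); try lra.
  intros G T HG HT. rewrite !Rminus_0_r in *.
  apply abs_bnd in HG. apply abs_bnd in HT.
  assert (ET : F_T p W f G T = T * (b0 - c2 * T - f * (vartheta p T * omega p G - lamfTmax p * omega p Gs)))
    by (unfold F_T, b0, c2; field; lra).
  rewrite EG, ET. fold c1.
  assert (Hb : b0 - c2 * T - f * (vartheta p T * omega p G - lamfTmax p * omega p Gs) <= b0 / 2).
  { pose proof (th_ge p Hp T) as Hth. fold Cp in Hth.
    pose proof (om_nn p Hp G). pose proof (om_le1 p Hp G).
    assert (HaT : Rabs T < r) by (apply Rabs_def1; lra).
    assert (Hv1 : (vartheta p T - lamfTmax p) * omega p G >= - (Cp * r)).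
    { assert (0 <= (vartheta p T - lamfTmax p + Cp * Rabs T) * omega p G) by (apply Rmult_le_pos; lra).
      assert (0 <= Cp * Rabs T * (1 - omega p G)) by (apply Rmult_le_pos; [apply Rmult_le_pos|]; try lra; apply Rabs_pos).
      assert (Cp * Rabs T <= Cp * r) by (apply Rmult_le_compat_l; lra).
      nra. }
    pose proof (om_diff p Hp Gs G) as Hdf. unfold Rdiv in Hdf. fold ia in Hdf.
    assert (Habs : Rabs (Gs * Gs - G * G) <= 3 * Gs * r).
    { apply Rabs_le. split; nra. }
    assert (Hv3 : Rabs (Gs * Gs - G * G) * ia <= 3 * Gs * r * ia) by (apply Rmult_le_compat_r; lra).
    assert (Hv4 : lamfTmax p * (omega p Gs - omega p G) <= lamfTmax p * (3 * Gs * r * ia)) by (apply Rmult_le_compat_l; lra).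
    assert (Hv5 : - (vartheta p T * omega p G - lamfTmax p * omega p Gs) <= Cp * r + lamfTmax p * (3 * Gs * r * ia)) by nra.
    assert (Hv6 : - f * (vartheta p T * omega p G - lamfTmax p * omega p Gs) <= f * (Cp * r + lamfTmax p * (3 * Gs * r * ia))) by nra.
    assert (- c2 * T <= c2 * r) by nra.
    assert (r * L <= r2 * L) by (apply Rmult_le_compat_r; lra).
    unfold L in *. nra. }
  set (bb := b0 - c2 * T - f * (vartheta p T * omega p G - lamfTmax p * omega p Gs)) in *.
  set (x := G - Gs) in *.
  assert (HGr : Gs / 2 <= G <= 3 * Gs / 2) by (unfold x in *; lra).
  pose proof (Rle_0_sqr x). pose proof (Rle_0_sqr T). unfold Rsqr in *.
  assert (AM : - 2 * etaTG p * x * T <= c1 / 2 * (x * x) + 2 * (etaTG p * etaTG p) / c1 * (T * T)).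
  { assert (0 <= (c1 * x + 2 * etaTG p * T) * (c1 * x + 2 * etaTG p * T)) by apply Rle_0_sqr.
    assert (c1 / 2 * (x * x) + 2 * (etaTG p * etaTG p) / c1 * (T * T) + 2 * etaTG p * x * T
       = (c1 * x + 2 * etaTG p * T) * (c1 * x + 2 * etaTG p * T) / (2 * c1)) by (field; lra).
    assert (0 <= (c1 * x + 2 * etaTG p * T) * (c1 * x + 2 * etaTG p * T) / (2 * c1))
      by (apply Rdiv_le_0_compat; lra) || (unfold Rdiv; apply Rmult_le_pos; [lra| left; apply Rinv_0_lt_compat; lra]).
    lra. }
  assert (S1 : G * (- 2 * etaTG p * x * T) <= G * (c1 / 2 * (x * x) + 2 * (etaTG p * etaTG p) / c1 * (T * T)))
    by (apply Rmult_le_compat_l; lra).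
  assert (Q0 : 0 <= 2 * (etaTG p * etaTG p) / c1 * (T * T)).
  { apply Rmult_le_pos; [|lra]. unfold Rdiv; apply Rmult_le_pos; [nra| left; apply Rinv_0_lt_compat; lra]. }
  assert (S2 : G * (2 * (etaTG p * etaTG p) / c1 * (T * T)) <= P * (T * T)).
  { assert (HPe : P * (T * T) = 3 * Gs / 2 * (2 * (etaTG p * etaTG p) / c1 * (T * T))) by (unfold P; field; lra).
    rewrite HPe. apply Rmult_le_compat_r; lra. }
  assert (S3 : - (3 / 2) * c1 * G * (x * x) <= - (3 / 4) * c1 * Gs * (x * x)).
  { assert (c1 * (x * x) * (Gs / 2) <= c1 * (x * x) * G) by (apply Rmult_le_compat_l; nra). nra. }
  assert (S4 : T * T * bb <= T * T * (b0 / 2)) by (apply Rmult_le_compat_l; lra).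
  assert (S5 : x * x * k <= x * x * (3 / 4 * c1 * Gs)) by (apply Rmult_le_compat_l; lra).
  assert (S6 : B * (T * T) * k <= B * (T * T) * (- b0 / 2)) by (apply Rmult_le_compat_l; nra).
  assert (S7 : B * (T * T) * b0 = - (2 * P) * (T * T)) by (rewrite <- HB; ring).
  nra.
Qed.

Lemma case3 p W f : params_pos p -> 0 < W -> 0 < f -> 1 < R1W p W -> R_F p W f < 1 ->
  is_equilibrium p W f 0 (Tstar p W) /\ loc_asym_stable p W f 0 (Tstar p W).
Proof.
  intros Hp HW Hf H1 HRF.
  pose proof (gG_pos p W Hp HW) as HgG. pose proof (gT_pos p W Hp HW) as HgT.
  pose proof (KG_pos p W Hp) as HKG. pose proof (KT_pos p W Hp) as HKT.
  pose proof Hp as Hp'. unfold params_pos in Hp'. decompose [and] Hp'.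
  pose proof H1 as H1'. unfold R1W in H1'. apply div_gt1 in H1'; [|lra].
  set (Ts := Tstar p W).
  assert (EqT : g_T p W * (1 - Ts / K_T p W) = deltaT p).
  { unfold Ts, Tstar, R1W. field. repeat split; lra. }
  assert (HTs : 0 < Ts).
  { unfold Ts, Tstar, R1W. apply Rmult_lt_0_compat; [lra|].
    replace (1 / (g_T p W / deltaT p)) with (deltaT p / g_T p W) by (field; lra).
    assert (deltaT p / g_T p W < 1). { apply (Rmult_lt_reg_r (g_T p W)); [lra|]. unfold Rdiv. rewrite Rmult_assoc, Rinv_l by lra. lra. }
    lra. }
  set (c1 := g_G p W / K_G p W). set (c2 := g_T p W / K_T p W).
  assert (Hc1 : 0 < c1) by (apply Rdiv_lt_0_compat; lra).
  assert (Hc2 : 0 < c2) by (apply Rdiv_lt_0_compat; lra).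
  assert (ET : forall G T, F_T p W f G T = T * (- c2 * (T - Ts) - f * vartheta p T * omega p G)).
  { intros G T. assert (Hx : F_T p W f G T = T * (- c2 * (T - Ts) - f * vartheta p T * omega p G) + T * (g_T p W * (1 - Ts / K_T p W) - deltaT p)).
    { unfold F_T, c2. field. lra. }
    rewrite Hx, EqT. ring. }
  assert (Om0 : omega p 0 = 0) by (unfold omega; simpl; unfold Rdiv; ring).
  split. { split. unfold F_G; ring. rewrite ET, Om0. ring. }
  unfold R_F in HRF. fold Ts in HRF. apply div_lt1 in HRF; [|assert (0 < etaTG p * Ts) by (apply Rmult_lt_0_compat; lra); nra].
  set (a0 := g_G p W - deltaG p - etaTG p * Ts - lamfG p * f).
  assert (Ha0 : a0 < 0) by (unfold a0; lra).
  assert (EG : forall G T, F_G p W f G T = G * (a0 - c1 * G - etaTG p * (T - Ts))).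
  { intros G T. unfold F_G, a0, c1. field. lra. }
  set (ia := / (alpha p * alpha p)).
  assert (Hia : 0 < ia) by (unfold ia; apply Rinv_0_lt_compat; nra).
  set (Q := 3 * f * Ts * lamfTmax p * ia).
  assert (HQ : 0 < Q) by (unfold Q; apply Rmult_lt_0_compat; [apply Rmult_lt_0_compat; [apply Rmult_lt_0_compat; [apply Rmult_lt_0_compat|]|]|]; lra).
  set (L := 2 * (c1 + etaTG p) + Q).
  assert (HL : 0 < L) by (unfold L; lra).
  set (r1 := - a0 / L).
  assert (Hr1 : r1 * L = - a0) by (unfold r1; field; lra).
  assert (0 < r1) by (unfold r1; apply Rdiv_lt_0_compat; lra).
  set (r := Rmin (Ts / 2) r1).
  assert (r <= Ts / 2) by apply Rmin_l. assert (r <= r1) by apply Rmin_r.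
  assert (0 < r) by (apply Rmin_glb_lt; lra).
  set (k := Rmin (- a0) (c2 * Ts)).
  assert (k <= - a0) by apply Rmin_l. assert (k <= c2 * Ts) by apply Rmin_r.
  assert (0 < k) by (apply Rmin_glb_lt; nra).
  apply (las p W f 0 Ts 1 1 r k); try lra.
  intros G T HG HT. rewrite !Rminus_0_r in *.
  apply abs_bnd in HG. apply abs_bnd in HT.
  rewrite EG, ET.
  set (y := T - Ts) in *.
  assert (HTr : Ts / 2 <= T <= 3 * Ts / 2) by (unfold y in *; lra).
  pose proof (th_pos p Hp T) as Hth. pose proof (th_le p Hp T ltac:(lra)) as Hth2.
  pose proof (om_nn p Hp G) as Hom. pose proof (om_le p Hp G) as Hom2. unfold Rdiv in Hom2. fold ia in Hom2.
  pose proof (Rle_0_sqr G). pose proof (Rle_0_sqr y). unfold Rsqr in *.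
  set (z := f * T * vartheta p T * omega p G).
  assert (Hz0 : 0 <= z) by (unfold z; apply Rmult_le_pos; [apply Rmult_le_pos; [apply Rmult_le_pos|]|]; lra).
  assert (Hz : z <= f * (3 * Ts / 2) * lamfTmax p * (G * G * ia)).
  { unfold z. apply Rmult_le_compat; try lra.
    - apply Rmult_le_pos; [apply Rmult_le_pos|]; lra.
    - apply Rmult_le_compat; try lra. apply Rmult_le_pos; lra.
      apply Rmult_le_compat_l; lra. }
  assert (S1 : - 2 * z * y <= 2 * z * r) by nra.
  assert (S2 : 2 * z * r <= Q * r * (G * G)).
  { assert (Hzz : 2 * z <= Q * (G * G)) by (unfold Q; lra). apply Rmult_le_compat_r with (r := r) in Hzz; [|lra]. lra. }
  assert (Ha : a0 - c1 * G - etaTG p * y <= a0 + (c1 + etaTG p) * r) by nra.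
  assert (S3 : G * G * (a0 - c1 * G - etaTG p * y) <= G * G * (a0 + (c1 + etaTG p) * r)) by (apply Rmult_le_compat_l; lra).
  assert (S4 : r * L <= r1 * L) by (apply Rmult_le_compat_r; lra).
  assert (S5 : y * y * (c2 * (Ts / 2)) <= y * y * (c2 * T)) by (apply Rmult_le_compat_l; nra).
  assert (S6 : G * G * k <= G * G * (- a0)) by (apply Rmult_le_compat_l; lra).
  assert (S7 : y * y * k <= y * y * (c2 * Ts)) by (apply Rmult_le_compat_l; lra).
  assert (Eq : 2 * 1 * G * (G * (a0 - c1 * G - etaTG p * y)) + 2 * 1 * y * (T * (- c2 * y - f * vartheta p T * omega p G))
     = 2 * (G * G * (a0 - c1 * G - etaTG p * y)) - 2 * (y * y * (c2 * T)) - 2 * z * y) by (unfold z; ring).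
  rewrite Eq.
  assert (S8 : G * G * (r * L) <= G * G * (- a0)) by (apply Rmult_le_compat_l; lra).
  unfold L in S8. nra.
Qed.

Theorem theorem2 (p : params) (W f : R) :
  params_pos p -> 0 < W -> 0 < f ->
  (R1W p W < 1 -> R2W p W f < 1 ->
     is_equilibrium p W f 0 0 /\ loc_asym_stable p W f 0 0) /\
  (1 < R2W p W f -> R_G p W f < 1 ->
     is_equilibrium p W f (Gstar p W f) 0 /\
     loc_asym_stable p W f (Gstar p W f) 0) /\
  (1 < R1W p W -> R_F p W f < 1 ->
     is_equilibrium p W f 0 (Tstar p W) /\
     loc_asym_stable p W f 0 (Tstar p W)).
Proof.
  intros Hp HW Hf. split; [|split].
  - intros; apply case1; assumption.
  - intros; apply case2; assumption.
  - intros; apply case3; assumption.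
Qed.
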